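(* Let $\varpi$ be a minuscule fundamental weight, $\bar\phi\in W/W_{P_\varpi}$ and let $\phi\in W$ be the smallest (minimal length) element of the class $\bar\phi$. Let $\phi=s_{\gamma_1}\cdots s_{\gamma_n}$ be a reduced expression with $\gamma_k$ simple roots, set $\beta_k=i(\gamma_k)$ and $\alpha_1=\beta_1$, $\alpha_k=s_{\beta_1}\cdots s_{\beta_{k-1}}(\beta_k)$ for $k\in[2,n]$. Then for all $i,j\in[1,n]$ we have $\langle\alpha_i^\vee,\alpha_j\rangle\ge 0$.
   Context: $G$ is a semisimple algebraic group with maximal torus $T$, Borel subgroup $B\supset T$, simple roots $S$, Weyl group $W$ with longest element $w_0$. For a root $\alpha$, $s_\alpha$ is the reflection and $\alpha^\vee$ the coroot. The Weyl involution $i$ sends a simple root $\beta$ to $-w_0(\beta)$ (and a fundamental weight $\varpi$ to $-w_0(\varpi)$). A fundamental weight $\varpi$ is minuscule if $\langle\alpha^\vee,\varpi\rangle\le1$ for all positive roots $\alpha$; $P_\varpi\supseteq B$ is the associated maximal parabolic subgroup and $W_{P_\varpi}$ its Weyl group. *)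

(* Defs.v *)
From HB Require Import structures.
From mathcomp Require Import all_boot all_order all_algebra.
Set Implicit Arguments. Unset Strict Implicit. Unset Printing Implicit Defensive.
Import Order.TTheory GRing.Theory Num.Theory.
Local Open Scope ring_scope.

Section RootSystems.
Variables (R : realFieldType) (d : nat).
Local Notation V := 'rV[R]_d.

Definition dotp (u v : V) : R := (u *m v^T) 0 0.

Definition cpair (a v : V) : R := 2 * dotp a v / dotp a a.

Definition refl (a v : V) : V := v - cpair a v *: a.

Definition mxrows (s : seq V) : 'M[R]_(size s, d) := \matrix_(i < size s) s`_i.

Definition is_root_system (Phi : seq V) : Prop :=
  [/\ uniq Phi, 0 \notin Phi & \rank (mxrows Phi) = d] /\
  [/\ (forall a b, a \in Phi -> b \in Phi -> refl a b \in Phi),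
      (forall a b, a \in Phi -> b \in Phi -> exists z : int, cpair a b = z%:~R) &
      (forall a (c : R), a \in Phi -> c *: a \in Phi -> c = 1 \/ c = -1)].

Definition nonneg_comb (S : seq V) (v : V) : Prop :=
  exists c : 'I_(size S) -> nat, v = \sum_(i < size S) (c i)%:R *: S`_i.

Definition is_base (Phi S : seq V) : Prop :=
  [/\ uniq S, {subset S <= Phi}, row_free (mxrows S) &
      forall a, a \in Phi -> nonneg_comb S a \/ nonneg_comb S (- a)].

Definition positive_root (Phi S : seq V) (a : V) : Prop :=
  a \in Phi /\ nonneg_comb S a.

(* Weyl group elements as words in reflections: [:: a1; ..; an] acts as
   s_{a1} o ... o s_{an} *)
Definition wact (s : seq V) (v : V) : V := foldr refl v s.

Definition simple_word (S s : seq V) : bool := all (fun x => x \in S) s.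

Definition same_elt (s t : seq V) : Prop := forall v, wact s v = wact t v.

Definition reduced_word (S s : seq V) : Prop :=
  simple_word S s /\
  forall t, simple_word S t -> same_elt t s -> (size s <= size t)%N.

Definition longest_word (S w0 : seq V) : Prop :=
  reduced_word S w0 /\ forall t, reduced_word S t -> (size t <= size w0)%N.

Definition weyl_inv (w0 : seq V) (b : V) : V := - wact w0 b.

Definition fund_weight (S : seq V) (delta varpi : V) : Prop :=
  forall b, b \in S -> cpair b varpi = (b == delta)%:R.

Definition minuscule (Phi S : seq V) (varpi : V) : Prop :=
  forall a, positive_root Phi S a -> cpair a varpi <= 1.

(* words in the simple reflections generating W_{P_varpi}
   (simple roots b with <b^vee, varpi> = 0) *)
Definition parabolic_word (S : seq V) (varpi : V) (u : seq V) : bool :=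
  all (fun b => (b \in S) && (cpair b varpi == 0)) u.

Definition min_coset_word (S : seq V) (varpi : V) (g : seq V) : Prop :=
  forall u t, parabolic_word S varpi u -> simple_word S t ->
    same_elt t (g ++ u) -> (size g <= size t)%N.

(* alpha_k = s_{b_1} ... s_{b_{k-1}} (b_k), b_k = i(g_k); 0-indexed list *)
Definition alphas (w0 g : seq V) : seq V :=
  let bs := map (weyl_inv w0) g in
  mkseq (fun k => wact (take k bs) (nth 0 bs k)) (size g).

End RootSystems.

(* Main.v *)
Require Import Defs.
From HB Require Import structures.
From mathcomp Require Import all_boot all_order all_algebra.
From mathcomp Require Import ring lra zify.
From Stdlib Require Import Classical.
Set Implicit Arguments. Unset Strict Implicit. Unset Printing Implicit Defensive.
Import Order.TTheory GRing.Theory Num.Theory.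
Local Open Scope ring_scope.

Section S.
Variables (R : realFieldType) (d : nat).
Local Notation V := 'rV[R]_d.
Implicit Types (u v w a b : V) (s t : seq V).

Lemma dotpE u v : dotp u v = \sum_k u 0 k * v 0 k.
Proof. by rewrite /dotp !mxE; apply: eq_bigr => k _; rewrite mxE. Qed.

Lemma dotpC u v : dotp u v = dotp v u.
Proof. by rewrite !dotpE; apply: eq_bigr => k _; rewrite mulrC. Qed.

Lemma dotpDl u v w : dotp (u + v) w = dotp u w + dotp v w.
Proof. rewrite !dotpE -big_split /=; apply: eq_bigr => k _; by rewrite mxE mulrDl. Qed.

Lemma dotpZl (c : R) u v : dotp (c *: u) v = c * dotp u v.
Proof. rewrite !dotpE mulr_sumr; apply: eq_bigr => k _; by rewrite mxE mulrA. Qed.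

Lemma dotpNl u v : dotp (- u) v = - dotp u v.
Proof. by rewrite -scaleN1r dotpZl mulN1r. Qed.

Lemma dotp0l v : dotp 0 v = 0.
Proof. by rewrite -(scale0r 0) dotpZl mul0r. Qed.

Lemma dotpBl u v w : dotp (u - v) w = dotp u w - dotp v w.
Proof. by rewrite dotpDl dotpNl. Qed.

Lemma dotpDr u v w : dotp w (u + v) = dotp w u + dotp w v.
Proof. by rewrite !(dotpC w) dotpDl. Qed.
Lemma dotpZr (c : R) u v : dotp v (c *: u) = c * dotp v u.
Proof. by rewrite !(dotpC v) dotpZl. Qed.
Lemma dotpNr u v : dotp v (- u) = - dotp v u.
Proof. by rewrite !(dotpC v) dotpNl. Qed.
Lemma dotpBr u v w : dotp w (u - v) = dotp w u - dotp w v.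
Proof. by rewrite !(dotpC w) dotpBl. Qed.

Lemma dotp_suml I (r : seq I) (P : pred I) (F : I -> V) v :
  dotp (\sum_(i <- r | P i) F i) v = \sum_(i <- r | P i) dotp (F i) v.
Proof. by apply: (big_morph (fun u => dotp u v)) => [x y|]; rewrite ?dotpDl ?dotp0l. Qed.

Lemma dotp_ge0 u : 0 <= dotp u u.
Proof. rewrite dotpE; apply: sumr_ge0 => k _; by rewrite -expr2 sqr_ge0. Qed.

Lemma dotp_eq0 u : (dotp u u == 0) = (u == 0).
Proof.
apply/idP/idP => [|/eqP ->]; last by rewrite dotp0l.
rewrite dotpE psumr_eq0 => [/allP H|k _]; last by rewrite -expr2 sqr_ge0.
apply/eqP/matrixP => i k; rewrite ord1 mxE.
by have /implyP /(_ isT) := H k (mem_index_enum _); rewrite mulf_eq0 orbb => /eqP.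
Qed.

Lemma dotp_gt0 u : u != 0 -> 0 < dotp u u.
Proof. by move=> nz; rewrite lt_def dotp_eq0 nz dotp_ge0. Qed.


Lemma dotp_cpair a v : a != 0 -> dotp a v = cpair a v * dotp a a / 2.
Proof. move=> nz; have := dotp_gt0 nz; rewrite /cpair => h; field; rewrite gt_eqF //. Qed.

Lemma cpairNl a v : cpair (- a) v = - cpair a v.
Proof. by rewrite /cpair dotpNl dotpNr dotpNl opprK mulrN mulNr. Qed.

Lemma cpairDr a u v : cpair a (u + v) = cpair a u + cpair a v.
Proof. by rewrite /cpair dotpDr mulrDr mulrDl. Qed.
Lemma cpairZr a (c : R) v : cpair a (c *: v) = c * cpair a v.
Proof. rewrite /cpair dotpZr; ring. Qed.
Lemma cpairNr a v : cpair a (- v) = - cpair a v.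
Proof. by rewrite -scaleN1r cpairZr mulN1r. Qed.
Lemma cpairBr a u v : cpair a (u - v) = cpair a u - cpair a v.
Proof. by rewrite cpairDr cpairNr. Qed.

Lemma cpair_self a : a != 0 -> cpair a a = 2.
Proof. move=> nz; have := dotp_gt0 nz; rewrite /cpair => h; field; rewrite gt_eqF //. Qed.

Lemma refl0 v : refl 0 v = v.
Proof. by rewrite /refl scaler0 subr0. Qed.

Lemma refl_self a : refl a a = - a.
Proof.
have [->|nz] := eqVneq a 0; first by rewrite refl0 oppr0.
by rewrite /refl cpair_self // scaler_nat mulr2n opprD addrA subrr add0r.
Qed.

Lemma reflD a u v : refl a (u + v) = refl a u + refl a v.
Proof. by rewrite /refl cpairDr scalerDl opprD addrACA. Qed.
Lemma reflZ a (c : R) v : refl a (c *: v) = c *: refl a v.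
Proof. by rewrite /refl cpairZr scalerBr scalerA. Qed.
Lemma reflN a v : refl a (- v) = - refl a v.
Proof. by rewrite -scaleN1r reflZ scaleN1r. Qed.
Lemma reflB a u v : refl a (u - v) = refl a u - refl a v.
Proof. by rewrite reflD reflN. Qed.

Lemma reflK a : involutive (refl a).
Proof. by move=> v; rewrite [X in refl a X]/refl reflB reflZ refl_self scalerN opprK /refl subrK. Qed.

Lemma refl_dotp a u v : dotp (refl a u) (refl a v) = dotp u v.
Proof.
have [->|nz] := eqVneq a 0; first by rewrite !refl0.
have h := dotp_gt0 nz.
rewrite /refl dotpBl !dotpBr !dotpZl !dotpZr /cpair (dotpC u a).
field; rewrite gt_eqF //.
Qed.

Lemma refl_cpair a u v : cpair (refl a u) (refl a v) = cpair u v.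
Proof. by rewrite /cpair !refl_dotp. Qed.

Lemma reflNa a v : refl (- a) v = refl a v.
Proof. by rewrite /refl cpairNl scalerN scaleNr opprK. Qed.


Lemma wact_cons a s v : wact (a :: s) v = refl a (wact s v).
Proof. by []. Qed.
Lemma wact_nil v : wact [::] v = v.
Proof. by []. Qed.
Lemma wact_cat s t v : wact (s ++ t) v = wact s (wact t v).
Proof. by rewrite /wact foldr_cat. Qed.

Lemma wactD s u v : wact s (u + v) = wact s u + wact s v.
Proof. by elim: s => //= a s ->; rewrite reflD. Qed.
Lemma wactZ s (c : R) v : wact s (c *: v) = c *: wact s v.
Proof. by elim: s => //= a s ->; rewrite reflZ. Qed.
Lemma wactN s v : wact s (- v) = - wact s v.
Proof. by rewrite -scaleN1r wactZ scaleN1r. Qed.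
Lemma wactB s u v : wact s (u - v) = wact s u - wact s v.
Proof. by rewrite wactD wactN. Qed.

Lemma wact_dotp s u v : dotp (wact s u) (wact s v) = dotp u v.
Proof. by elim: s => //= a s IH; rewrite refl_dotp. Qed.
Lemma wact_cpair s u v : cpair (wact s u) (wact s v) = cpair u v.
Proof. by rewrite /cpair !wact_dotp. Qed.

Lemma wact_revK s v : wact (rev s) (wact s v) = v.
Proof.
elim: s v => //= a s IH v.
by rewrite rev_cons -cats1 wact_cat /= reflK IH.
Qed.
Lemma wactK_rev s v : wact s (wact (rev s) v) = v.
Proof. by rewrite -{1}(revK s) wact_revK. Qed.

Lemma refl_wact s a v : refl (wact s a) v = wact s (refl a (wact (rev s) v)).
Proof.
rewrite {2}/refl wactB wactZ wactK_rev.
by rewrite -(wact_cpair s a) wactK_rev.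
Qed.

Lemma wact_map_neg (w0 : seq V) t v :
  wact (map (weyl_inv w0) t) v = wact w0 (wact t (wact (rev w0) v)).
Proof.
elim: t v => [|b t IH] v /=; first by rewrite wactK_rev.
by rewrite IH /weyl_inv reflNa refl_wact wact_revK.
Qed.


Section Roots.
Variables (Phi S : seq V) (delta varpi : V).
Hypotheses (rs : is_root_system Phi) (bs : is_base Phi S)
  (fw : fund_weight S delta varpi) (mn : minuscule Phi S varpi).

Lemma S_Phi b : b \in S -> b \in Phi.
Proof. by case: bs => _ h _ _; apply: h. Qed.

Lemma Phi_nz a : a \in Phi -> a != 0.
Proof. by case: rs => [[_ h _] _] ha; apply: contraNneq h => <-. Qed.

Lemma refl_Phi a b : a \in Phi -> b \in Phi -> refl a b \in Phi.
Proof. by case: rs => _ [h _ _]; apply: h. Qed.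

Lemma wact_Phi s a : simple_word S s -> a \in Phi -> wact s a \in Phi.
Proof.
elim: s => //= b s IH /andP[bS sS] aP.
by apply: refl_Phi; [exact: S_Phi | exact: IH].
Qed.

Lemma lin_indep (x : 'I_(size S) -> R) :
  \sum_(i < size S) x i *: S`_i = 0 -> forall i, x i = 0.
Proof.
move=> h i; case: bs => _ _ rf _.
have e : (\row_j x j) *m mxrows S = 0 *m mxrows S.
  rewrite mul0mx -h mulmx_sum_row; apply: eq_bigr => j _.
  by rewrite mxE /mxrows rowK.
by have /matrixP/(_ 0 i) := row_free_inj rf e; rewrite !mxE.
Qed.

Lemma simple_nonneg b : b \in S -> nonneg_comb S b.
Proof.
move=> bS; have lt : (index b S < size S)%N by rewrite index_mem.
pose i0 : 'I_(size S) := Ordinal lt.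
exists (fun i => nat_of_bool (i == i0)).
rewrite (bigD1 i0) //= eqxx scale1r big1 ?addr0 ?nth_index //.
by move=> j /negbTE ->; rewrite scale0r.
Qed.

Lemma nonneg_dom v : nonneg_comb S v -> 0 <= dotp v varpi.
Proof.
case=> c ->; rewrite dotp_suml; apply: sumr_ge0 => i _.
rewrite dotpZl mulr_ge0 ?ler0n //.
have iS : S`_i \in S by rewrite mem_nth.
rewrite dotp_cpair ?Phi_nz ?S_Phi // fw //.
by rewrite divr_ge0 ?mulr_ge0 ?ler0n ?dotp_ge0.
Qed.

Lemma L3 b r : b \in S -> r \in Phi -> nonneg_comb S r ->
  nonneg_comb S (refl b r) \/ r = b.
Proof.
move=> bS rP [c er].
have rbP := refl_Phi (S_Phi bS) rP.
case: bs => _ _ _ hb; case: (hb _ rbP) => [h|[c' e']]; [by left | right].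
set m := cpair b r.
have lt : (index b S < size S)%N by rewrite index_mem.
pose i0 : 'I_(size S) := Ordinal lt.
have sd : \sum_(i < size S) (nat_of_bool (i == i0))%:R *: S`_i = b.
  rewrite (bigD1 i0) //= eqxx scale1r big1 ?addr0 ?nth_index //.
  by move=> j /negbTE ->; rewrite scale0r.
have key : forall i, (c i + c' i)%:R - m * (nat_of_bool (i == i0))%:R = 0 :> R.
  apply: lin_indep.
  rewrite (eq_bigr (fun i => (c i)%:R *: S`_i + (c' i)%:R *: S`_i
        - m *: ((nat_of_bool (i == i0))%:R *: S`_i))) => [|i _]; last first.
    by rewrite scalerBl natrD scalerDl scalerA.
  rewrite sumrB big_split /= -er -e' -scaler_sumr sd.
  by rewrite /refl -/m opprB addrCA subrr addr0 subrr.
have zero : forall i, i != i0 -> c i = 0%N.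
  move=> i ne; have := key i; rewrite (negbTE ne) mulr0 subr0 => /eqP.
  by rewrite pnatr_eq0 addn_eq0 => /andP[/eqP -> _].
have e : r = (c i0)%:R *: b.
  rewrite er (bigD1 i0) //= big1 ?addr0 ?nth_index // => i ne.
  by rewrite zero // mulr0n scale0r.
case: rs => _ [_ _ hr].
have := hr b (c i0)%:R (S_Phi bS); rewrite -e => /(_ rP) [h1|h1].
  by rewrite e h1 scale1r.
by move: (ler0n R (c i0)); rewrite h1 oppr_ge0 ler10.
Qed.

Lemma simple_rev s : simple_word S (rev s) = simple_word S s.
Proof. exact: all_rev. Qed.

Lemma L4a a q : a \in S -> simple_word S q ->
  nonneg_comb S (wact (rev q) a) \/
  exists q1 b q2, q = q1 ++ b :: q2 /\ wact (rev q1) a = b.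
Proof.
move=> aS; elim/last_ind: q => [|q b IH]; first by left; exact: simple_nonneg.
rewrite /simple_word all_rcons => /andP[bS qS].
case: (IH qS) => [h|[q1 [b' [q2 [-> e]]]]].
  rewrite rev_rcons wact_cons.
  have rP : wact (rev q) a \in Phi.
    by apply: wact_Phi; rewrite ?simple_rev // S_Phi.
  case: (L3 bS rP h) => [h'|e]; first by left.
  by right; exists q, b, [::]; rewrite cats1.
by right; exists q1, b', (rcons q2 b); rewrite rcons_cat.
Qed.

Lemma del2 a q1 b q2 v : wact (rev q1) a = b ->
  wact (a :: q1 ++ b :: q2) v = wact q1 (wact q2 v).
Proof.
move=> <-; rewrite wact_cons wact_cat wact_cons refl_wact revK wactK_rev.
by rewrite reflK.
Qed.

Lemma L4 g p a q : reduced_word S g -> g = p ++ a :: q ->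
  nonneg_comb S (wact (rev q) a).
Proof.
case=> sg red eg; move: (sg); rewrite eg /simple_word all_cat /= => /and3P[pS aS qS].
case: (L4a aS qS) => // [[q1 [b [q2 [eqq e]]]]].
have : (size g <= size (p ++ q1 ++ q2))%N.
  apply: red.
    by move: qS; rewrite eqq /simple_word !all_cat /= pS => /andP[-> /andP[_ ->]].
  by move=> v; rewrite eg eqq !wact_cat del2.
by rewrite eg eqq !size_cat /= size_cat /=; lia.
Qed.

Lemma stab n (w : seq V) : (size w <= n)%N -> simple_word S w -> wact w varpi = varpi ->
  exists u : seq V, parabolic_word S varpi u /\ same_elt w u.
Proof.
elim: n w => [|n IH] w.
  by rewrite leqn0 size_eq0 => /eqP -> _ _; exists [::].
move=> sz sw fx; case: (classic (reduced_word S w)) => [rw|nrw].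
  case: w sz sw fx rw => [|a w'] sz sw fx rw; first by exists [::].
  move: (sw); rewrite /simple_word /= => /andP[aS sw'].
  have nn := L4 (p := [::]) rw (erefl _).
  have h1 := nonneg_dom nn.
  have fx' : wact w' varpi = refl a varpi by rewrite -{2}fx /= reflK.
  have hpos := dotp_gt0 (Phi_nz (S_Phi aS)).
  have e1 : dotp (wact (rev w') a) varpi = - dotp a varpi.
    rewrite -(wact_dotp w') wactK_rev fx' /refl dotpBr dotpZr /cpair.
    by field; rewrite gt_eqF.
  have h2 := nonneg_dom (simple_nonneg aS).
  have z : dotp a varpi = 0.
    by apply/eqP; rewrite eq_le h2 andbT -oppr_ge0 -e1.
  have cz : cpair a varpi = 0 by rewrite /cpair z mulr0 mul0r.
  have fix' : wact w' varpi = varpi by rewrite fx' /refl cz scale0r subr0.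
  have [u [pu su]] := IH w' sz sw' fix'.
  exists (a :: u); split; first by rewrite /parabolic_word /= aS cz eqxx.
  by move=> v /=; rewrite su.
have [t [st et lt]] : exists t : seq V, [/\ simple_word S t, same_elt t w & (size t < size w)%N].
  apply: NNPP => H; apply: nrw; split => // t st et; rewrite leqNgt.
  by apply/negP => lt; apply: H; exists t.
have fixt : wact t varpi = varpi by rewrite et.
have [|u [pu su]] := IH t _ st fixt; first by lia.
by exists u; split => // v; rewrite -et su.
Qed.

Lemma cint q b : simple_word S q -> b \in S ->
  exists z : int, cpair b (wact q varpi) = z%:~R.
Proof.
elim: q b => [|a q IH] b /=.
  by move=> _ bS; rewrite fw //; exists (Posz (b == delta)).
move=> /andP[aS qS] bS.
have [z1 e1] := IH b qS bS.
have [z2 e2] := IH a qS aS.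
case: rs => _ [_ hz _].
have [z3 e3] := hz b a (S_Phi bS) (S_Phi aS).
exists (z1 - z2 * z3).
by rewrite /refl cpairBr cpairZr e1 e2 e3 rmorphB rmorphM.
Qed.

Lemma eta_props g p a q : reduced_word S g -> min_coset_word S varpi g ->
  g = p ++ a :: q ->
  [/\ wact (rev q) a \in Phi, nonneg_comb S (wact (rev q) a),
      0 < dotp (wact (rev q) a) varpi & cpair (wact (rev q) a) varpi = 1].
Proof.
move=> rg mc eg.
have [sg _] := rg.
move: (sg); rewrite eg /simple_word all_cat /= => /andP[pS /andP[aS qS]].
set e := wact (rev q) a.
have eP : e \in Phi by apply: wact_Phi; rewrite ?simple_rev // S_Phi.
have nn : nonneg_comb S e := L4 rg eg.
have pos : 0 < dotp e varpi.
  rewrite lt_def nonneg_dom // andbT; apply/eqP => z.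
  have cz : cpair e varpi = 0 by rewrite /cpair z mulr0 mul0r.
  have rw : forall v, wact (rev q ++ a :: q) v = refl e v.
    by move=> v; rewrite wact_cat wact_cons /e refl_wact revK.
  have sw : simple_word S (rev q ++ a :: q).
    by rewrite /simple_word all_cat /= all_rev aS qS.
  have fx : wact (rev q ++ a :: q) varpi = varpi by rewrite rw /refl cz scale0r subr0.
  have [u [pu su]] := stab (leqnn _) sw fx.
  have : (size g <= size (p ++ q))%N.
    apply: (mc u) => //; first by rewrite /simple_word all_cat pS qS.
    move=> v; rewrite [RHS]wact_cat -su rw eg !wact_cat wact_cons /e refl_wact revK.
    by rewrite wactK_rev reflK.
  by rewrite eg !size_cat /=; lia.
split => //.
have [z ez] := cint qS aS.
have ce : cpair e varpi = z%:~R by rewrite -(wact_cpair q) /e wactK_rev.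
have le1 : cpair e varpi <= 1 by apply: mn; split.
have gt0 : 0 < cpair e varpi.
  by rewrite /cpair divr_gt0 ?mulr_gt0 ?dotp_gt0 ?Phi_nz.
move: le1 gt0; rewrite ce lerz1 ltr0z => h1 h2.
have -> : z = 1 by lia.
by [].
Qed.

Lemma final x y : x \in Phi -> y \in Phi -> 0 < dotp x varpi ->
  cpair y varpi = 1 -> 0 <= cpair x y.
Proof.
move=> xP yP hxv cy.
have hx := dotp_gt0 (Phi_nz xP).
have hy := dotp_gt0 (Phi_nz yP).
case: (leP 0 (dotp x y)) => h.
  by rewrite /cpair divr_ge0 ?mulr_ge0 // ltW.
exfalso.
set c := cpair x y.
have hc : c < 0.
  by rewrite /c /cpair ltr_pdivrMr // mul0r pmulr_rlt0.
set r := refl x y.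
have rP : r \in Phi by apply: refl_Phi.
have dr : dotp r varpi = dotp y varpi - c * dotp x varpi by rewrite /r /refl dotpBl dotpZl.
have rr : dotp r r = dotp y y by rewrite /r refl_dotp.
have dy : dotp y varpi = dotp y y / 2 by rewrite dotp_cpair ?Phi_nz // cy mul1r.
have cA : c * dotp x varpi < 0 by rewrite pmulr_llt0.
have gt1 : 1 < cpair r varpi.
  rewrite /cpair rr ltr_pdivlMr // mul1r dr dy.
  lra.
have rpos : 0 < dotp r varpi by rewrite dr dy; lra.
case: bs => _ _ _ hb; case: (hb _ rP) => nn.
  have := mn (conj rP nn); lra.
have := nonneg_dom nn; rewrite dotpNl; lra.
Qed.

End Roots.
End S.

Unset Implicit Arguments.

Theorem mainTheorem3 (R : realFieldType) (d : nat) (Phi S : seq 'rV[R]_d)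
  (delta varpi : 'rV[R]_d) (w0 g : seq 'rV[R]_d) :
  is_root_system Phi -> is_base Phi S ->
  delta \in S -> fund_weight S delta varpi -> minuscule Phi S varpi ->
  longest_word S w0 ->
  reduced_word S g -> min_coset_word S varpi g ->
  forall i j, (i < size g)%N -> (j < size g)%N ->
    0 <= cpair (alphas w0 g)`_i (alphas w0 g)`_j.
Proof.
move=> rs bs dS fw mn lw rg mc i j hi hj.
have dec : forall k, (k < size g)%N ->
    g = take k g ++ g`_k :: drop k.+1 g.
  by move=> k hk; rewrite -(drop_nth 0 hk) cat_take_drop.
have key : forall k, (k < size g)%N ->
    (alphas w0 g)`_k = wact (w0 ++ g) (wact (rev (drop k.+1 g)) g`_k).
  move=> k hk; rewrite /alphas nth_mkseq // (nth_map 0) // -map_take.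
  rewrite wact_map_neg /weyl_inv wactN wact_revK wact_cat.
  set e := wact (rev (drop k.+1 g)) g`_k.
  by rewrite [in RHS](dec k hk) wact_cat wact_cons /e wactK_rev refl_self.
rewrite (key i hi) (key j hj) wact_cpair.
have [xP _ xpos _] := eta_props rs bs fw mn rg mc (dec i hi).
have [yP _ _ y1] := eta_props rs bs fw mn rg mc (dec j hj).
exact (final rs bs fw mn xP yP xpos y1).
Qed.
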